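(* For $k\ge2$, let $\mathcal B'$ be the set of $k\times k$ symmetric matrices over $\mathbb F_2$ of rank $k-2$ with every row sum $0$. Then $\#\mathcal B'=2^{\binom{k-1}{2}}\,u_{k-1}\,(2^{k-1}-1)$, where $u_j=\prod_{i=1}^{\lfloor j/2\rfloor}(1-2^{1-2i})$. *)

(* Defs.v *)
From HB Require Import structures.
From mathcomp Require Import all_boot all_order all_algebra.
Set Implicit Arguments. Unset Strict Implicit. Unset Printing Implicit Defensive.
Import Order.TTheory GRing.Theory Num.Theory.

Local Open Scope ring_scope.

Definition u_seq (j : nat) : rat :=
  \prod_(1 <= i < (j./2).+1) (1 - (2%:Q ^- (2 * i - 1)%N)).

Definition Bprime (k : nat) : {set 'M['F_2]_k} :=
  [set M : 'M['F_2]_k | [&& M^T == M, \rank M == (k - 2)%N &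
                            [forall i, \sum_(j < k) M i j == 0]]].

(* Main.v *)
Require Import Defs.
From HB Require Import structures.
From mathcomp Require Import all_boot all_order all_algebra ring zify.
Import Order.TTheory GRing.Theory Num.Theory.
Local Open Scope ring_scope.
Set Implicit Arguments. Unset Strict Implicit. Unset Printing Implicit Defensive.

Local Notation F2 := 'F_2.

Lemma card_sum (T : finType) (P : pred T) : #|[set x | P x]| = (\sum_(x | P x) 1)%N.
Proof. by rewrite -sum1_card; apply: eq_bigl => x; rewrite inE. Qed.

Lemma mulmx_unit_eq0 m n (X : 'M[F2]_(m, n)) (Q : 'M[F2]_n) :
  Q \in unitmx -> (X *m Q == 0) = (X == 0).
Proof.
move=> uQ; apply/eqP/eqP => [h|->]; last by rewrite mul0mx.
by rewrite -(mulmxK uQ X) h mul0mx.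
Qed.

Lemma rank_conj n (P M : 'M[F2]_n) : P \in unitmx -> \rank (P *m M *m P^T) = \rank M.
Proof.
move=> uP; rewrite mxrankMfree ?row_free_unit ?unitmx_tr //.
by rewrite -mxrank_tr trmx_mul mxrankMfree ?row_free_unit ?unitmx_tr // mxrank_tr.
Qed.

Lemma conj_inj n (P : 'M[F2]_n) : P \in unitmx -> injective (fun M => P *m M *m P^T).
Proof.
move=> uP M1 M2 /= h.
have uPT : P^T \in unitmx by rewrite unitmx_tr.
move: (congr1 (fun X => invmx P *m X *m invmx P^T) h) => /=.
by rewrite -!mulmxA !mulmxV // !mulmx1 !mulmxA !mulVmx // !mul1mx.
Qed.

Lemma conj_sym n (P M : 'M[F2]_n) : P \in unitmx ->
  ((P *m M *m P^T)^T == P *m M *m P^T) = (M^T == M).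
Proof.
move=> uP; have -> : (P *m M *m P^T)^T = P *m M^T *m P^T.
  by rewrite !trmx_mul trmxK mulmxA.
exact: (inj_eq (conj_inj uP)).
Qed.

Lemma conj_unit n (P M : 'M[F2]_n) : P \in unitmx ->
  (P *m M *m P^T \in unitmx) = (M \in unitmx).
Proof. by move=> uP; rewrite !unitmx_mul uP unitmx_tr uP andbT. Qed.

Lemma transport n (P : 'M[F2]_n) (A B : pred 'M[F2]_n) :
  P \in unitmx -> (forall M, B (P *m M *m P^T) = A M) ->
  #|[set M | A M]| = #|[set M | B M]|.
Proof.
move=> uP hAB.
have uPT : P^T \in unitmx by rewrite unitmx_tr.
rewrite -(card_imset _ (conj_inj uP)); apply: eq_card => X; rewrite [in RHS]inE.
apply/imsetP/idP => [[M]|hX].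
  by rewrite inE => hM ->; rewrite hAB.
exists (invmx P *m X *m invmx P^T); last first.
  by rewrite !mulmxA mulmxV // mul1mx -mulmxA mulVmx // mulmx1.
by rewrite inE -hAB !mulmxA mulmxV // mul1mx -mulmxA mulVmx // mulmx1.
Qed.
Definition e0 n : 'rV[F2]_(1 + n) := row_mx 1%:M 0.

Lemma pid1_e0 n : pid_mx 1 = e0 n.
Proof.
apply/matrixP => i j; rewrite !mxE; case: splitP => k hk; rewrite !mxE hk.
  by rewrite (ord1 i) (ord1 k).
by rewrite (ord1 i).
Qed.

Lemma e0_neq0 n : e0 n != 0.
Proof. by rewrite /e0 row_mx_eq0 negb_and matrix_nonzero1. Qed.

Lemma L0 n (v : 'rV[F2]_(1 + n)) : v != 0 -> exists2 P, P \in unitmx & e0 n *m P = v.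
Proof.
move=> nz.
have r1 : \rank v = 1%N.
  apply/eqP; rewrite eqn_leq rank_leq_row lt0n mxrank_eq0 nz //.
have := mulmx_ebase v; rewrite r1 pid1_e0.
set c := col_ebase v; set R := row_ebase v => hv.
have uc : c \in unitmx by apply: col_ebase_unit.
exists (c 0 0 *: R).
  rewrite unitmxZ ?row_ebase_unit //.
  by move: uc; rewrite unitmxE det_mx11.
by rewrite -scalemxAr -hv {2}[c]mx11_scalar mul_scalar_mx scalemxAl.
Qed.

Lemma e0_block n (A : 'M[F2]_1) (B : 'M_(1,n)) (C : 'M_(n,1)) (D : 'M_n) :
  e0 n *m block_mx A B C D = row_mx A B.
Proof. by rewrite /e0 mul_row_block !mul0mx !addr0 !mul1mx. Qed.

Lemma sym_dl p q (M : 'M[F2]_(p + q)) : M^T = M -> dlsubmx M = (ursubmx M)^T.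
Proof. by move=> h; rewrite trmx_ursub h. Qed.

Lemma sym_dr p q (M : 'M[F2]_(p + q)) : M^T = M -> (drsubmx M)^T = drsubmx M.
Proof. by move=> h; rewrite trmx_drsub h. Qed.

Lemma block00_inj n : injective (fun N : 'M[F2]_n => block_mx (0 : 'M_1) 0 0 N).
Proof. by move=> N1 N2 /(congr1 drsubmx); rewrite !block_mxKdr. Qed.

Lemma G n r (v : 'rV[F2]_(1 + n)) : v != 0 ->
  #|[set M : 'M[F2]_(1 + n) | [&& M^T == M, v *m M == 0 & \rank M == r]]| =
  #|[set N : 'M[F2]_n | (N^T == N) && (\rank N == r)]|.
Proof.
move=> nz; have [P uP hP] := L0 nz.
have uPT : P^T \in unitmx by rewrite unitmx_tr.
rewrite (@transport _ P _ (fun M => [&& M^T == M, e0 n *m M == 0 & \rank M == r])) //; last first.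
  by move=> M; rewrite conj_sym // rank_conj // !mulmxA hP mulmx_unit_eq0.
rewrite -[RHS](card_imset _ (@block00_inj n)).
apply: eq_card => X; rewrite inE; apply/and3P/imsetP.
  move=> [/eqP hs h0 hr].
  have hX : X = block_mx 0 0 0 (drsubmx X).
    move: h0; rewrite -{1}(submxK X) e0_block row_mx_eq0 => /andP[/eqP h1 /eqP h2].
    by rewrite -{1}(submxK X) (sym_dl hs) h1 h2 trmx0.
  exists (drsubmx X) => //.
  by rewrite inE sym_dr // eqxx /= -(eqP hr) {2}hX rank_diag_block_mx mxrank0.
move=> [N]; rewrite inE => /andP[/eqP hN hr] ->; split.
- by rewrite tr_block_mx !trmx0 hN.
- by rewrite e0_block row_mx_eq0 !eqxx.
- by rewrite rank_diag_block_mx mxrank0.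
Qed.

Lemma F2_cases (a : F2) : a = 0 \/ a = 1.
Proof. by case: a => [[|[|]]] // ?; [left|right]; apply: val_inj. Qed.

Lemma ker_unique n (M : 'M[F2]_(1 + n)) : \rank M = n ->
  #|[set v : 'rV[F2]_(1+n) | (v != 0) && (v *m M == 0)]| = 1%N.
Proof.
move=> hr.
have rk : \rank (kermx M) = 1%N by rewrite mxrank_ker hr addnK.
set v0 := nz_row (kermx M).
have nz0 : v0 != 0 by rewrite nz_row_eq0 -mxrank_eq0 rk.
have k0 : v0 *m M == 0 by rewrite -sub_kermx nz_row_sub.
suff -> : [set v : 'rV[F2]_(1+n) | (v != 0) && (v *m M == 0)] = [set v0] by rewrite cards1.
apply/setP => v; rewrite !inE; apply/idP/eqP => [/andP[nzv hv] | ->]; last by rewrite nz0 k0.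
have sv : (v <= kermx M)%MS by rewrite sub_kermx.
have rv : \rank v = 1%N.
  by apply/eqP; rewrite eqn_leq rank_leq_row lt0n mxrank_eq0 nzv.
have sK : (kermx M <= v)%MS.
  by have := mxrank_leqif_sup sv; rewrite rv rk => /leqif_refl.
have : (v0 <= v)%MS by apply: submx_trans sK; rewrite nz_row_sub.
case/submxP => x hx; move: hx; rewrite [x]mx11_scalar mul_scalar_mx.
case: (F2_cases (x 0 0)) => ->; first by rewrite scale0r => h; move: nz0; rewrite h eqxx.
by rewrite scale1r.
Qed.

Definition Scount n := #|[set N : 'M[F2]_n | (N^T == N) && (N \in unitmx)]|.

Lemma card_F2 : #|{: F2}| = 2%N.
Proof. by rewrite card_Fp. Qed.

Lemma card_rV n : #|{: 'rV[F2]_n}| = (2 ^ n)%N.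
Proof. by rewrite card_mx card_F2 mul1n. Qed.

Lemma T_count n :
  #|[set M : 'M[F2]_(1+n) | (M^T == M) && (\rank M == n)]| =
   ((2 ^ (1+n)).-1 * Scount n)%N.
Proof.
rewrite card_sum.
transitivity (\sum_(M : 'M[F2]_(1+n) | (M^T == M) && (\rank M == n))
               \sum_(v : 'rV[F2]_(1+n) | (v != 0) && (v *m M == 0)) 1%N).
  by apply: eq_bigr => M /andP[_ /eqP hr]; rewrite -card_sum ker_unique.
rewrite (exchange_big_dep (fun v : 'rV[F2]_(1+n) => v != 0)) /=; last by move=> M v _ /andP[].
transitivity (\sum_(v : 'rV[F2]_(1+n) | v != 0) Scount n).
  apply: eq_bigr => v nzv; rewrite -card_sum.
  transitivity #|[set M : 'M[F2]_(1 + n) | [&& M^T == M, v *m M == 0 & \rank M == n]]|.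
    by apply: eq_card => X; rewrite !inE nzv /=; case: (X^T == X); rewrite //= andbC.
  rewrite (G n nzv) /Scount; apply: eq_card => X; rewrite !inE -row_free_unit.
  by [].
rewrite sum_nat_const cardC1 card_rV.
done.
Qed.

Lemma Bprime_T n : #|Bprime n.+2| = #|[set M : 'M[F2]_(1+n) | (M^T == M) && (\rank M == n)]|.
Proof.
have nz : (const_mx 1 : 'rV[F2]_(1 + (1 + n))) != 0.
  by apply/eqP => /matrixP /(_ 0 0); rewrite !mxE => /eqP; rewrite oner_eq0.
rewrite -(G n nz); apply: eq_card => X; rewrite /Bprime !inE.
have -> : (n.+2 - 2 = n)%N by rewrite -addn2 addnK.
case hs: (X^T == X) => //=; rewrite andbC; congr (_ && _).
have hX : forall i j, X i j = X j i.
  by move=> i j; rewrite -{1}(eqP hs) mxE.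
apply/forallP/eqP => [h|h i].
  apply/matrixP => i j; rewrite !mxE.
  transitivity (\sum_k X j k); last by apply/eqP; exact: h j.
  by apply: eq_bigr => k _; rewrite mxE mul1r hX.
move/matrixP: h => /(_ 0 i); rewrite !mxE => h; apply/eqP; rewrite -[RHS]h.
by apply: eq_bigr => k _; rewrite mxE mul1r hX.
Qed.

Lemma trCHC p q (H : 'M[F2]_p) (C : 'M[F2]_(p,q)) : H^T = H ->
  (C^T *m invmx H *m C)^T = C^T *m invmx H *m C.
Proof. by move=> sH; rewrite !trmx_mul trmxK trmx_inv sH mulmxA. Qed.

Lemma schur_det p q (H : 'M[F2]_p) (C : 'M[F2]_(p,q)) (N : 'M[F2]_q) : H \in unitmx ->
  \det (block_mx H C C^T (N + C^T *m invmx H *m C)) = \det H * \det N.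
Proof.
move=> uH.
have -> : block_mx H C C^T (N + C^T *m invmx H *m C) =
   block_mx 1%:M 0 (C^T *m invmx H) 1%:M *m block_mx H C 0 N.
  rewrite mulmx_block !mul1mx !mul0mx !addr0 -[C^T *m invmx H *m H]mulmxA mulVmx // mulmx1.
  by rewrite [N + _]addrC.
by rewrite det_mulmx det_lblock det_ublock !det1 !mul1r.
Qed.

Lemma schur_count p q (H : 'M[F2]_p) (C : 'M[F2]_(p,q)) : H^T = H -> H \in unitmx ->
  #|[set M : 'M[F2]_(p + q) | [&& M^T == M, M \in unitmx, ulsubmx M == H & ursubmx M == C]]|
  = Scount q.
Proof.
move=> sH uH.
pose f := fun N : 'M[F2]_q => block_mx H C C^T (N + C^T *m invmx H *m C).
have finj : injective f by move=> N1 N2 /(congr1 drsubmx); rewrite !block_mxKdr => /addIr.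
rewrite /Scount -(card_imset _ finj); apply: eq_card => X; rewrite !inE.
apply/and4P/imsetP.
  move=> [/eqP hs hu /eqP h1 /eqP h2].
  have hX : X = f (drsubmx X - C^T *m invmx H *m C).
    by rewrite /f subrK -h1 -h2 -(sym_dl hs) submxK.
  exists (drsubmx X - C^T *m invmx H *m C) => //.
  rewrite inE; apply/andP; split.
    by rewrite raddfB /= sym_dr // trCHC.
  move: hu; rewrite {1}hX /f !unitmxE schur_det // !unitfE mulf_eq0 negb_or.
  by case/andP.
move=> [N]; rewrite inE => /andP[/eqP sN uN] ->.
rewrite /f tr_block_mx trmxK raddfD /= sN trCHC // sH eqxx /=.
rewrite unitmxE schur_det // unitfE mulf_neq0 -?unitfE -?unitmxE //=.
by rewrite block_mxKul block_mxKur !eqxx.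
Qed.

Lemma schur_countH p q (H : 'M[F2]_p) : H^T = H -> H \in unitmx ->
  #|[set M : 'M[F2]_(p + q) | [&& M^T == M, M \in unitmx & ulsubmx M == H]]|
  = (2 ^ (p * q) * Scount q)%N.
Proof.
move=> sH uH; rewrite card_sum.
rewrite (partition_big (fun M : 'M[F2]_(p + q) => ursubmx M) predT) //=.
transitivity (\sum_(C : 'M[F2]_(p, q)) Scount q).
  apply: eq_bigr => C _; rewrite -(schur_count C sH uH) card_sum.
  by apply: eq_bigl => M; rewrite !andbA.
by rewrite sum_nat_const card_mx card_F2.
Qed.

Definition g n (a : F2) (b : 'rV[F2]_n) :=
  #|[set M : 'M[F2]_(1 + n) | [&& M^T == M, M \in unitmx, ulsubmx M 0 0 == a & ursubmx M == b]]|.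

Lemma eq11 (A : 'M[F2]_1) (a : F2) : (A == a%:M) = (A 0 0 == a).
Proof.
apply/eqP/eqP => [->|h]; first by rewrite mxE.
by apply/matrixP => i j; rewrite (ord1 i) (ord1 j) h mxE.
Qed.

Lemma S_split n : Scount (1 + n) = (\sum_(a : F2) \sum_(b : 'rV[F2]_n) g a b)%N.
Proof.
rewrite /Scount card_sum (partition_big (fun M : 'M[F2]_(1 + n) => ulsubmx M 0 0) predT) //=.
apply: eq_bigr => a _.
rewrite (partition_big (fun M : 'M[F2]_(1 + n) => ursubmx M) predT) //=.
apply: eq_bigr => b _; rewrite /g card_sum.
by apply: eq_bigl => M; rewrite !andbA.
Qed.

Lemma g1 n (b : 'rV[F2]_n) : g 1 b = Scount n.
Proof.
rewrite -(schur_count b (trmx1 _ _) (unitmx1 _ _)) /g.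
by apply: eq_card => M; rewrite !inE eq11.
Qed.

Lemma g00 n : g 0 (0 : 'rV[F2]_n) = 0%N.
Proof.
rewrite /g card_sum big_pred0 // => M; apply/negP => /and4P[/eqP hs hu /eqP h1 /eqP h2].
have h1' : ulsubmx M = 0 by apply/matrixP => i j; rewrite (ord1 i) (ord1 j) h1 mxE.
have hX : M = block_mx 0 0 0 (drsubmx M).
  by rewrite -{1}(submxK M) (sym_dl hs) h1' h2 trmx0.
by move: hu; rewrite hX unitmxE det_ublock det0 mul0r unitr0.
Qed.

Lemma conjP_blocks m n (Q : 'M[F2]_n) (M : 'M[F2]_(m + n)) :
  ulsubmx (block_mx 1%:M 0 0 Q *m M *m (block_mx 1%:M 0 0 Q)^T) = ulsubmx M /\
  ursubmx (block_mx 1%:M 0 0 Q *m M *m (block_mx 1%:M 0 0 Q)^T) = ursubmx M *m Q^T.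
Proof.
rewrite -[M]submxK tr_block_mx !trmx0 trmx1 !mulmx_block.
rewrite !(mul1mx, mul0mx, mulmx0, mulmx1, addr0, add0r).
by rewrite !block_mxKul !block_mxKur.
Qed.

Lemma gconst n (b b' : 'rV[F2]_(1 + n)) : b != 0 -> b' != 0 -> g 0 b = g 0 b'.
Proof.
move=> nz nz'; have [R1 u1 h1] := L0 nz; have [R2 u2 h2] := L0 nz'.
pose Q := (invmx R1 *m R2)^T.
have uQ : Q \in unitmx by rewrite unitmx_tr unitmx_mul unitmx_inv u1.
have uQT : Q^T \in unitmx by rewrite unitmx_tr.
have hQ : b *m Q^T = b' by rewrite trmxK -h1 -h2 mulmxA mulmxK.
pose P := block_mx (1%:M : 'M[F2]_1) 0 0 Q.
have uP : P \in unitmx by rewrite unitmxE det_ublock det1 mul1r -unitmxE.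
rewrite /g; apply: (transport uP) => M.
have [e1 e2] := conjP_blocks Q M.
rewrite conj_sym // conj_unit // e1 e2 -hQ.
by rewrite (inj_eq (can_inj (mulmxK uQT))).
Qed.

Definition Hm (a : F2) : 'M[F2]_2 := \matrix_(i < 2, j < 2)
  if (i == 0 :> nat) then (if (j == 0 :> nat) then 0 else 1) else (if (j == 0 :> nat) then 1 else a).

Lemma ord2_cases (i : 'I_2) : (i = ord0) \/ (i = ord_max).
Proof. by case: i => [[|[|]]] // ?; [left|right]; apply: val_inj. Qed.

Lemma Hm_sym a : (Hm a)^T = Hm a.
Proof.
apply/matrixP => i j; rewrite !mxE.
by case: (ord2_cases i) => ->; case: (ord2_cases j) => ->.
Qed.

Lemma Hm_unit a : Hm a \in unitmx.
Proof.
pose K : 'M[F2]_2 := \matrix_(i < 2, j < 2)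
  if (i == 0 :> nat) then (if (j == 0 :> nat) then a else 1) else (if (j == 0 :> nat) then 1 else 0).
suff : Hm a *m K = 1%:M by case/mulmx1_unit.
apply/matrixP => i j; rewrite !mxE !big_ord_recr big_ord0 /= !mxE add0r.
case: (ord2_cases i) => ->; case: (ord2_cases j) => -> /=;
  rewrite ?(mul0r, mulr0, mul1r, mulr1, add0r, addr0) //.
by case: (F2_cases a) => ->; rewrite ?addr0 //; apply: val_inj.
Qed.

Lemma entries n (M : 'M[F2]_(n.+2)) : M^T = M ->
  ((@ulsubmx _ 1 (1+n) 1 (1+n) M) 0 0 == 0) && ((@ursubmx _ 1 (1+n) 1 (1+n) M) 0 0 == 1) =
  (@ulsubmx _ 2 n 2 n M == Hm 0) || (@ulsubmx _ 2 n 2 n M == Hm 1).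
Proof.
move=> hs.
pose i0 : 'I_(n.+2) := ord0. pose i1 : 'I_(n.+2) := Ordinal (isT : (1 < n.+2)%N).
have hsym : forall i j, M i j = M j i by move=> i j; rewrite -{1}hs mxE.
have E1 : (@ulsubmx _ 1 (1+n) 1 (1+n) M) 0 0 = M i0 i0.
  by rewrite !mxE; f_equal; apply: val_inj.
have E2 : (@ursubmx _ 1 (1+n) 1 (1+n) M) 0 0 = M i0 i1.
  by rewrite !mxE; f_equal; apply: val_inj.
have E3 : forall i j : 'I_2, (@ulsubmx _ 2 n 2 n M) i j =
    M (if (i == 0 :> nat) then i0 else i1) (if (j == 0 :> nat) then i0 else i1).
  move=> i j; rewrite !mxE; case: (ord2_cases i) => ->; case: (ord2_cases j) => -> /=;
  by f_equal; apply: val_inj.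
rewrite E1 E2; apply/idP/idP.
  case/andP => /eqP h00 /eqP h01.
  have hM : @ulsubmx _ 2 n 2 n M = Hm (M i1 i1).
    apply/matrixP => i j; rewrite E3 mxE.
    case: (ord2_cases i) => ->; case: (ord2_cases j) => -> //=.
    by rewrite hsym.
  by rewrite hM; case: (F2_cases (M i1 i1)) => ->; rewrite eqxx ?orbT.
case/orP => /eqP hM; have e00 := E3 ord0 ord0; have e01 := E3 ord0 ord_max;
  rewrite hM !mxE /= in e00 e01; by rewrite -e00 -e01 !eqxx.
Qed.

Lemma count_b1 n : #|[set b : 'rV[F2]_(1 + n) | b 0 0 == 1]| = (2 ^ n)%N.
Proof.
have inj : injective (fun c : 'rV[F2]_n => row_mx (1%:M : 'M[F2]_1) c).
  by move=> c1 c2 /eq_row_mx [].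
transitivity #|[set row_mx (1%:M : 'M[F2]_1) c | c in [set: 'rV[F2]_n]]|; last first.
  by rewrite card_imset // cardsT card_rV.
apply: eq_card => b; rewrite inE; apply/idP/imsetP => [h | [c _ ->]].
  exists (rsubmx b); first by rewrite inE.
  rewrite -[b in LHS]hsubmxK; congr row_mx.
  apply/matrixP => i j; rewrite (ord1 i) (ord1 j) !mxE eqxx mulr1n -(eqP h).
  by rewrite (_ : lshift n 0 = 0) //; apply: val_inj.
have -> : (row_mx (1%:M : 'M[F2]_1) c) 0 0 = (row_mx (1%:M : 'M[F2]_1) c) 0 (lshift n 0).
  by f_equal; apply: val_inj.
by rewrite row_mxEl mxE.
Qed.

Lemma sumA n : \sum_(b : 'rV[F2]_(1 + n) | b 0 0 == 1) g 0 b =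
  #|[set M : 'M[F2]_(1 + (1 + n)) |
     [&& M^T == M, M \in unitmx, ulsubmx M 0 0 == 0 & ursubmx M 0 0 == 1]]|.
Proof.
rewrite card_sum (partition_big (fun M : 'M[F2]_(1 + (1 + n)) => ursubmx M)
   (fun b : 'rV[F2]_(1 + n) => b 0 0 == 1)); last by move=> M /and4P[].
apply: eq_bigr => b hb; rewrite /g card_sum; apply: eq_bigl => M.
case e: (ursubmx M == b); rewrite ?andbF ?andbT //.
by rewrite (eqP e) hb !andbT.
Qed.

Lemma Hm01 : Hm 0 != Hm 1.
Proof. by apply/eqP => /matrixP /(_ ord_max ord_max); rewrite !mxE /= => /eqP; rewrite eq_sym oner_eq0. Qed.

Lemma g0e0 n : (2 ^ n * g 0%R (e0 n) = 2 * (2 ^ (2 * n) * Scount n))%N.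
Proof.
have e : \sum_(b : 'rV[F2]_(1 + n) | b 0 0 == 1) g 0 b = (2 ^ n * g 0%R (e0 n))%N.
  rewrite (eq_bigr (fun _ => g 0 (e0 n))); last first.
    move=> b hb; apply: gconst (e0_neq0 n).
    by apply/eqP => hb0; move: hb; rewrite hb0 mxE eq_sym oner_eq0.
  rewrite sum_nat_const -(count_b1 n); congr (_ * _)%N.
  by apply: eq_card => b; rewrite inE.
rewrite -e sumA.
transitivity #|[set M : 'M[F2]_(2 + n) |
     [&& M^T == M, M \in unitmx & (ulsubmx M == Hm 0) || (ulsubmx M == Hm 1)]]|.
  apply: eq_card => M; rewrite !inE; case hs: (M^T == M) => //=.
  by rewrite (entries (eqP hs)).
transitivity (#|[set M : 'M[F2]_(2 + n) | [&& M^T == M, M \in unitmx & ulsubmx M == Hm 0%R]]| +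
   #|[set M : 'M[F2]_(2 + n) | [&& M^T == M, M \in unitmx & ulsubmx M == Hm 1%R]]|)%N.
  rewrite !card_sum !(big_mkcond (fun M => [&& _ , _ & _])) -big_split /=.
  apply: eq_bigr => M _; case: (M^T == M); case: (M \in unitmx) => //=.
  case hA: (ulsubmx M == Hm 0); case hB: (ulsubmx M == Hm 1) => //=.
  by move: Hm01; rewrite -(eqP hA) -(eqP hB) eqxx.
by rewrite !schur_countH ?Hm_sym ?Hm_unit // addnn -mul2n.
Qed.

Lemma S_rec0 n : Scount (1 + n) = (2 ^ n * Scount n + \sum_(b : 'rV[F2]_n) g 0%R b)%N.
Proof.
rewrite S_split (bigD1 (0 : F2)) //= (big_pred1 (1 : F2)); last first.
  by move=> a; case: (F2_cases a) => ->; rewrite ?eqxx // oner_eq0.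
rewrite addnC; congr (_ + _)%N.
rewrite (eq_bigr (fun _ => Scount n)); last by move=> b _; rewrite g1.
by rewrite sum_nat_const card_rV.
Qed.

Lemma S_rec n : Scount (2 + n) =
  (2 ^ (1 + n) * Scount (1 + n) + (2 ^ (1 + n)).-1 * (2 ^ (1 + n) * Scount n))%N.
Proof.
have -> : Scount (2 + n) = Scount (1 + (1 + n)) by [].
rewrite S_rec0; congr (_ + _)%N.
have hg : g 0%R (e0 n) = (2 ^ (1 + n) * Scount n)%N.
  apply/eqP; rewrite -(eqn_pmul2l (expn_gt0 2 n)) g0e0.
  by rewrite add1n expnS [(2 * n)%N]mul2n -addnn expnD; apply/eqP; ring.
rewrite (bigD1 (0 : 'rV[F2]_(1 + n))) //= g00 add0n.
rewrite (eq_bigr (fun _ => g 0%R (e0 n))); last by move=> b nz; apply: gconst (e0_neq0 n).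
by rewrite sum_nat_const cardC1 card_rV hg.
Qed.

Lemma S0 : Scount 0 = 1%N.
Proof.
rewrite /Scount (_ : [set N : 'M[F2]_0 | (N^T == N) && (N \in unitmx)] = [set: 'M[F2]_0]).
  by rewrite cardsT card_mx.
apply/setP => M; rewrite !inE unitmxE det_mx00 unitr1 andbT.
by apply/eqP/matrixP => i; case: i.
Qed.

Lemma S1 : Scount 1 = 1%N.
Proof.
have -> : Scount 1 = Scount (1 + 0) by [].
rewrite S_rec0 S0 big1 // => b _.
by rewrite (_ : b = 0) ?g00 //; apply/matrixP => i j; case: j.
Qed.

Lemma uS j : u_seq j.+1 = if odd j then u_seq j * (1 - 2%:Q ^- j) else u_seq j.
Proof.
rewrite /u_seq -uphalfE uphalf_half.
case hj: (odd j) => /=; last by rewrite add0n.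
rewrite add1n big_nat_recr //=; congr (_ * (1 - 2%:Q ^- _)).
have := odd_double_half j; rewrite hj -mul2n => e.
by rewrite -[in RHS]e; lia.
Qed.

Definition sv n : rat := 2%:Q ^+ 'C(n.+1, 2) * u_seq n.+1.

Lemma sv0 : sv 0 = 1.
Proof. by rewrite /sv bin_small // /u_seq big_geq // expr0 mulr1. Qed.

Lemma sv1 : sv 1 = 1.
Proof. by rewrite /sv binn /u_seq big_nat1 /= expr1; field. Qed.

Lemma sv_rec n : sv n.+2 = 2%:Q ^+ n.+1 * sv n.+1 + (2%:Q ^+ n.+1 - 1) * (2%:Q ^+ n.+1 * sv n).
Proof.
have b2 : 'C(n.+2, 2) = ('C(n.+1, 2) + n.+1)%N by rewrite binS bin1.
have b3 : 'C(n.+3, 2) = ('C(n.+1, 2) + n.+1 + n.+2)%N by rewrite binS bin1 b2.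
rewrite /sv b2 b3 (uS n.+2) (uS n.+1) !oddS negbK.
move: ('C(n.+1, 2)) (u_seq n.+1) => C u.
rewrite !exprD.
set x := 2%:Q ^+ n.+1; set c := 2%:Q ^+ C.
have hx : x != 0 by rewrite expf_neq0.
have h2 : 2%:Q ^+ n.+2 = 2 * x by rewrite exprS.
rewrite h2; clearbody x c; case: (odd n) => /=; by field.
Qed.

Lemma S_sv n : (Scount n)%:R = sv n :> rat.
Proof.
suff : (Scount n)%:R = sv n :> rat /\ (Scount n.+1)%:R = sv n.+1 :> rat by case.
elim: n => [|n [IH1 IH2]]; first by rewrite S0 S1 sv0 sv1.
split => //.
change (Scount n.+2) with (Scount (2 + n)).
rewrite S_rec !add1n natrD !natrM -subn1 natrB ?expn_gt0 // natrX IH1 IH2 sv_rec.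
by [].
Qed.

Unset Implicit Arguments.

Theorem mainTheorem8 (k : nat) (hk : (2 <= k)%N) :
  (#|Bprime k|)%:R =
    (2%:Q ^+ 'C(k.-1, 2)) * u_seq k.-1 * (2%:Q ^+ k.-1 - 1) :> rat.
Proof.
case: k hk => [|[|n]] // _.
rewrite Bprime_T T_count natrM -subn1 natrB ?expn_gt0 // natrX S_sv /sv add1n /=.
by rewrite mulrC.
Qed.
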